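(* Let $k$ be a field, $V$ a finite dimensional $k$-vector space with basis $\{x_1,\dots,x_n\}$, and $F=\{f_i:V^{\otimes n_i}\to V^{\otimes m_i}\}_{i\in I}$ a family of linear maps ($n_i,m_i\in\mathbb{N}_0$). Let $A$ be a bialgebra and suppose $V$ is a left $A$-comodule with structure map $\rho_A:V\to A\otimes V$ such that every $f_i$ is $A$-colinear (where $V^{\otimes \ell}$ carries the tensor product comodule structure induced by the multiplication of $A$, and $V^{\otimes 0}=k$ the trivial comodule). Then there exists a unique bialgebra morphism $\pi:A(F)\to A$ such that $(\pi\otimes \mathrm{id}_V)\circ\rho=\rho_A$, where $\rho:V\to A(F)\otimes V$, $\rho(x_i)=\sum_j t_i^j\otimes x_j$.
   Context: $C$ is the coalgebra with basis $\{t_i^j\}_{i,j=1}^n$, $\Delta(t_i^j)=\sum_k t_i^k\otimes t_k^j$, $\epsilon(t_i^j)=\delta_i^j$; $TC$ is its tensor algebra with the induced bialgebra structure. For $I\in\{1,\dots,n\}^\ell$ write $x_I=x_{i_1}\otimes\cdots\otimes x_{i_\ell}$ and $t_I^J=t_{i_1}^{j_1}\cdots t_{i_\ell}^{j_\ell}$. For a linear map $f:V^{\otimes p}\to V^{\otimes q}$ with $f(x_I)=\sum_J f_I^Jx_J$, $\mathcal{I}_f$ is the two-sided ideal of $TC$ generated by the elements $\sum_{J} t_I^J f_J^K-\sum_J f_I^J t_J^K$ for all $I\in\{1,\dots,n\}^p$, $K\in\{1,\dots,n\}^q$ (first sum over $J\in\{1,\dots,n\}^p$, second over $J\in\{1,\dots,n\}^q$).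 Each $\mathcal{I}_f$ is a bi-ideal, and $A(F):=TC/\mathcal{I}_F$ with $\mathcal{I}_F=\sum_{i\in I}\mathcal{I}_{f_i}$ is a bialgebra; $V$ is an $A(F)$-comodule via $\rho(x_i)=\sum_j t_i^j\otimes x_j$ and all $f_i$ are $A(F)$-colinear. *)

(* Defs.v *)
From HB Require Import structures.
From mathcomp Require Import all_boot all_order all_algebra.
From mathcomp Require Import finmap generic_quotient.
From mathcomp.classical Require Import boolp.
From mathcomp.multinomials Require Import monalg.

Set Implicit Arguments.
Unset Strict Implicit.
Unset Printing Implicit Defensive.

Import GRing.Theory.
Local Open Scope ring_scope.
Local Open Scope quotient_scope.

Section Tensors.
Variable k : fieldType.

Definition bilinform (A B : lmodType k) (b : A -> B -> k) : Prop :=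
  (forall c x x' y, b (c *: x + x') y = c * b x y + b x' y) /\
  (forall c x y y', b x (c *: y + y') = c * b x y + b x y').

Definition teq2 (A B : lmodType k) (s t : seq (A * B)) : Prop :=
  forall b : A -> B -> k, bilinform b ->
    \sum_(p <- s) b p.1 p.2 = \sum_(p <- t) b p.1 p.2.

End Tensors.

Section TC.
Variables (k : fieldType) (n : nat).
Definition TC := {malg k[{fmonom ('I_n * 'I_n)%type}]}.
Definition tgen (i j : 'I_n) : TC := << FMonom [:: (i, j)] >>.
Definition tmon (I J : seq 'I_n) : TC := \prod_(p <- zip I J) tgen p.1 p.2.
Definition TC_Delta (u : TC) : seq (TC * TC) :=
  flatten [seq [seq (u@_w *: tmon (unzip1 (fmonom_val w)) (val K),
                     tmon (val K) (unzip2 (fmonom_val w)))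
               | K : (size (fmonom_val w)).-tuple 'I_n] | w <- msupp u].
Definition TC_eps (u : TC) : k :=
  \sum_(w <- msupp u) u@_w * \prod_(p <- fmonom_val w) (p.1 == p.2)%:R.
End TC.

Section Main.
Variables (k : fieldType) (n : nat).

Inductive in_ideal (R : pzRingType) (G : R -> Prop) : R -> Prop :=
  | ideal_gen g : G g -> in_ideal G g
  | ideal0 : in_ideal G 0
  | idealD u v : in_ideal G u -> in_ideal G v -> in_ideal G (u + v)
  | idealMl c u : in_ideal G u -> in_ideal G (c * u)
  | idealMr u c : in_ideal G u -> in_ideal G (u * c).

Record linmap := LinMap {
  ldom : nat; lcod : nat;
  lcoef : ldom.-tuple 'I_n -> lcod.-tuple 'I_n -> k }.

Definition If_gen (f : linmap) (I : (ldom f).-tuple 'I_n)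
    (K : (lcod f).-tuple 'I_n) : TC k n :=
  \sum_(J : (ldom f).-tuple 'I_n) @lcoef f J K *: tmon k (val I) (val J)
  - \sum_(J : (lcod f).-tuple 'I_n) @lcoef f I J *: tmon k (val J) (val K).

Variables (Iset : Type) (F : Iset -> linmap).

Definition IF_gens (u : TC k n) : Prop :=
  exists i I K, u = @If_gen (F i) I K.

Definition IF : TC k n -> Prop := in_ideal IF_gens.

Definition eqIF (u v : TC k n) : bool := `[< IF (u - v) >].

Lemma eqIF_refl : reflexive eqIF.
Proof. by move=> u; apply/asboolP; rewrite subrr; apply: ideal0. Qed.

Lemma eqIF_sym : symmetric eqIF.
Proof.
move=> u v; apply/asboolP/asboolP => H.
  by rewrite -opprB -mulN1r; apply: idealMl.
by rewrite -opprB -mulN1r; apply: idealMl.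
Qed.

Lemma eqIF_trans : transitive eqIF.
Proof.
move=> v u w /asboolP H1 /asboolP H2; apply/asboolP.
have -> : u - w = (u - v) + (v - w) by rewrite addrA subrK.
exact: idealD.
Qed.

Canonical eqIF_rel := EquivRel eqIF eqIF_refl eqIF_sym eqIF_trans.

Definition AF := {eq_quot eqIF_rel}.
Definition piAF (u : TC k n) : AF := \pi_AF u.
Definition AF_add (x y : AF) : AF := piAF (repr x + repr y).
Definition AF_mul (x y : AF) : AF := piAF (repr x * repr y).
Definition AF_one : AF := piAF 1.
Definition AF_scale (c : k) (x : AF) : AF := piAF (c *: repr x).
Definition AF_Delta (x : AF) : seq (AF * AF) :=
  [seq (piAF p.1, piAF p.2) | p <- TC_Delta (repr x)].
Definition AF_eps (x : AF) : k := TC_eps (repr x).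
Definition rhoAF (i j : 'I_n) : AF := piAF (tgen k i j).

End Main.

Section Bialgebra.
Variable k : fieldType.

Definition trilinform (A B C : lmodType k) (b : A -> B -> C -> k) : Prop :=
  (forall c x x' y z, b (c *: x + x') y z = c * b x y z + b x' y z) /\
  (forall c x y y' z, b x (c *: y + y') z = c * b x y z + b x y' z) /\
  (forall c x y z z', b x y (c *: z + z') = c * b x y z + b x y z').

Definition teq3 (A B C : lmodType k) (s t : seq (A * B * C)) : Prop :=
  forall b : A -> B -> C -> k, trilinform b ->
    \sum_(p <- s) b p.1.1 p.1.2 p.2 = \sum_(p <- t) b p.1.1 p.1.2 p.2.

Variable A : algType k.
Implicit Types (Delta : A -> seq (A * A)) (eps : A -> k).

Definition is_bialgebra Delta eps : Prop :=
  [/\ (* Delta : A -> A (x) A is k-linear *)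
      (forall c x y, teq2 (Delta (c *: x + y))
                          ([seq (c *: p.1, p.2) | p <- Delta x] ++ Delta y)),
      (* Delta is multiplicative and unital *)
      (forall x y, teq2 (Delta (x * y))
                        [seq (p.1 * q.1, p.2 * q.2) | p <- Delta x, q <- Delta y]),
      teq2 (Delta 1) [:: (1, 1)],
      (* coassociativity: (Delta (x) id) Delta = (id (x) Delta) Delta *)
      (forall x, teq3 [seq (q.1, q.2, p.2) | p <- Delta x, q <- Delta p.1]
                      [seq (p.1, q.1, q.2) | p <- Delta x, q <- Delta p.2]) &
      (forall x, \sum_(p <- Delta x) eps p.1 *: p.2 = x
                 /\ \sum_(p <- Delta x) eps p.2 *: p.1 = x)]
  /\
  [/\ (forall c x y, eps (c *: x + y) = c * eps x + eps y),
      (forall x y, eps (x * y) = eps x * eps y) & eps 1 = 1].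

Variable n : nat.

Definition amon (a : 'I_n -> 'I_n -> A) (I J : seq 'I_n) : A :=
  \prod_(p <- zip I J) a p.1 p.2.

Definition is_comodule Delta eps (a : 'I_n -> 'I_n -> A) : Prop :=
  (forall i j, teq2 (Delta (a i j)) [seq (a i l, a l j) | l : 'I_n]) /\
  (forall i j, eps (a i j) = (i == j)%:R).

Definition colinear (a : 'I_n -> 'I_n -> A) (f : linmap k n) : Prop :=
  forall (I : (ldom f).-tuple 'I_n) (J : (lcod f).-tuple 'I_n),
    \sum_(K : (lcod f).-tuple 'I_n) @lcoef _ _ f I K *: amon a (val K) (val J)
    = \sum_(K : (ldom f).-tuple 'I_n) @lcoef _ _ f K J *: amon a (val I) (val K).

Variables (Iset : Type) (F : Iset -> linmap k n).

Definition is_bialg_morph_AF Delta eps (pi : AF F -> A) : Prop :=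
  [/\ (forall x y, pi (AF_add x y) = pi x + pi y),
      (forall x y, pi (AF_mul x y) = pi x * pi y),
      pi (AF_one F) = 1,
      (forall c x, pi (AF_scale c x) = c *: pi x) &
   (forall x, teq2 [seq (pi p.1, pi p.2) | p <- AF_Delta x] (Delta (pi x)))
   /\ (forall x, eps (pi x) = AF_eps x)].

End Bialgebra.

(* Main.v *)
Require Import Defs.
From HB Require Import structures.
From mathcomp Require Import all_boot all_order all_algebra.
From mathcomp Require Import finmap generic_quotient.
From mathcomp.classical Require Import boolp.
From mathcomp.multinomials Require Import monalg.
Import GRing.Theory.
Local Open Scope ring_scope.
Set Implicit Arguments.

Section Phi.
Variables (k : fieldType) (n : nat) (A : algType k) (a : 'I_n -> 'I_n -> A).

Definition hw (w : {fmonom ('I_n * 'I_n)%type}) : A := \prod_(p <- fmonom_val w) a p.1 p.2.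

Lemma hw_mmorph : mmorphism hw.
Proof.
split; last by rewrite /hw fm1 big_nil.
by move=> x y; rewrite /hw fmM big_cat.
Qed.

HB.instance Definition _ := isMultiplicative.Build _ A hw hw_mmorph.

Definition phi (u : TC k n) : A := mmap (in_alg A) hw u.

Lemma phiD x y : phi (x + y) = phi x + phi y.
Proof. exact: mmapD. Qed.
Lemma phiB x y : phi (x - y) = phi x - phi y.
Proof. exact: mmapB. Qed.
Lemma phi0 : phi 0 = 0.
Proof. exact: mmap0. Qed.
Lemma phiZ c x : phi (c *: x) = c *: phi x.
Proof. by rewrite /phi mmapZ /= mulr_algl. Qed.
Lemma phi1 : phi 1 = 1.
Proof. exact: mmap1. Qed.
Lemma phiM x y : phi (x * y) = phi x * phi y.
Proof.
have := @commr_mmap_is_multiplicative _ _ _ (in_alg A) hw.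
case=> [g m m'|H _]; last exact: H.
by rewrite /GRing.comm /= mulr_algl mulr_algr.
Qed.
Lemma phiE u : phi u = \sum_(w <- msupp u) u@_w *: hw w.
Proof. by rewrite /phi mmapE; apply: eq_bigr => w _; rewrite /= mulr_algl. Qed.
End Phi.
Arguments hw {k n A} a w.
Arguments phi {k n A} a u.
Arguments phiD {k n A} a x y.
Arguments phiB {k n A} a x y.
Arguments phi0 {k n A} a.
Arguments phiZ {k n A} a c x.
Arguments phi1 {k n A} a.
Arguments phiM {k n A} a x y.
Arguments phiE {k n A} a u.

Lemma sum_tupleS (R : nmodType) (T : finType) m (G : m.+1.-tuple T -> R) :
  \sum_(K : m.+1.-tuple T) G K = \sum_(l : T) \sum_(K : m.-tuple T) G [tuple of l :: K].
Proof.
rewrite pair_big /=.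
rewrite (reindex (fun p : T * m.-tuple T => [tuple of p.1 :: p.2])) /=.
  by apply: eq_bigl => p.
exists (fun K => (thead K, [tuple of behead K])).
  move=> [l K] _ /=; rewrite theadE; congr pair; exact: val_inj.
by move=> K _; rewrite [RHS]tuple_eta.
Qed.

Lemma sum_tuple0 (R : nmodType) (T : finType) (G : 0.-tuple T -> R) :
  \sum_(K : 0.-tuple T) G K = G [tuple].
Proof.
rewrite (eq_bigr (fun _ => G [tuple])); last by move=> K _; rewrite tuple0.
by rewrite sumr_const card_tuple expn0.
Qed.

Section Phi2.
Variables (k : fieldType) (n : nat) (A : algType k) (a : 'I_n -> 'I_n -> A).

Lemma phi_tgen i j : phi a (tgen k i j) = a i j.
Proof. by rewrite /phi /tgen mmapU /= /hw /= big_seq1 mulr_algl scale1r. Qed.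

Lemma phi_tmon I J : phi a (tmon k I J) = amon a I J.
Proof.
rewrite /tmon /amon (big_morph (phi a) (phiM a) (phi1 a)).
by apply: eq_bigr => p _; rewrite phi_tgen.
Qed.

Lemma phi_ideal (Iset : Type) (F : Iset -> linmap k n)
  (Hcol : forall i : Iset, colinear a (F i)) u0 : IF F u0 -> phi a u0 = 0.
Proof.
elim => [g [i [I [K ->]]]| |u v _ Hu _ Hv|c u _ Hu|u c _ Hu].
- rewrite /If_gen phiB !(big_morph (phi a) (phiD a) (phi0 a)).
  under eq_bigr do rewrite phiZ phi_tmon.
  under [X in _ - X]eq_bigr do rewrite phiZ phi_tmon.
  by rewrite (Hcol i I K) subrr.
- exact: phi0.
- by rewrite phiD Hu Hv addr0.
- by rewrite phiM Hu mulr0.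
- by rewrite phiM Hu mul0r.
Qed.
End Phi2.

Section Bil.
Variables (k : fieldType) (A : algType k).

Definition Bs (b : A -> A -> k) (s : seq (A * A)) := \sum_(p <- s) b p.1 p.2.

Variable b : A -> A -> k.
Hypothesis Hb : bilinform b.

Lemma bil0l y : b 0 y = 0.
Proof.
have := Hb.1 1 0 0 y; rewrite scale1r addr0 mul1r => /eqP.
by rewrite -subr_eq subrr eq_sym => /eqP.
Qed.
Lemma bil0r x : b x 0 = 0.
Proof.
have := Hb.2 1 x 0 0; rewrite scale1r addr0 mul1r => /eqP.
by rewrite -subr_eq subrr eq_sym => /eqP.
Qed.
Lemma bilZl c x y : b (c *: x) y = c * b x y.
Proof. by have := Hb.1 c x 0 y; rewrite addr0 bil0l addr0. Qed.
Lemma bilZr c x y : b x (c *: y) = c * b x y.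
Proof. by have := Hb.2 c x y 0; rewrite addr0 bil0r addr0. Qed.

Lemma bilML (p1 p2 : A) : bilinform (fun x y => b (p1 * x) (p2 * y)).
Proof.
split=> c x x' y /=; first by rewrite mulrDr -scalerAr Hb.1.
by rewrite mulrDr -scalerAr Hb.2.
Qed.
Lemma bilMR (p1 p2 : A) : bilinform (fun x y => b (x * p1) (y * p2)).
Proof.
split=> c x x' y /=; first by rewrite mulrDl -scalerAl Hb.1.
by rewrite mulrDl -scalerAl Hb.2.
Qed.
End Bil.
Arguments Bs {k A} b s.

Section Delta.
Variables (k : fieldType) (n : nat) (A : algType k) (Delta : A -> seq (A * A))
  (eps : A -> k) (HA : is_bialgebra Delta eps)
  (a : 'I_n -> 'I_n -> A) (Ha : is_comodule Delta eps a).

Lemma Delta_lin b (Hb : bilinform b) c x y :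
  Bs b (Delta (c *: x + y)) = c * Bs b (Delta x) + Bs b (Delta y).
Proof.
case: HA => [[HL _ _ _ _] _]; rewrite /Bs (HL c x y b Hb) big_cat big_map /=.
by rewrite mulr_sumr; congr (_ + _); apply: eq_bigr => p _; rewrite bilZl.
Qed.

Lemma Delta_0 b (Hb : bilinform b) : Bs b (Delta 0) = 0.
Proof.
have := Delta_lin Hb (-1) 0 0; rewrite scaler0 addr0 mulN1r addNr.
by [].
Qed.

Lemma Delta_sum b (Hb : bilinform b) (T : Type) (s : seq T) (c : T -> k) (x : T -> A) :
  Bs b (Delta (\sum_(i <- s) c i *: x i)) = \sum_(i <- s) c i * Bs b (Delta (x i)).
Proof.
elim: s => [|i s IH]; first by rewrite !big_nil Delta_0.
by rewrite !big_cons Delta_lin // IH.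
Qed.

Lemma Delta_mul b (Hb : bilinform b) x y :
  Bs b (Delta (x * y)) = \sum_(p <- Delta x) \sum_(q <- Delta y) b (p.1 * q.1) (p.2 * q.2).
Proof.
case: HA => [[_ HM _ _ _] _]; rewrite /Bs (HM x y b Hb).
by rewrite big_allpairs_dep.
Qed.

Definition hs (s : seq ('I_n * 'I_n)) : A := \prod_(p <- s) a p.1 p.2.

Lemma Dhs s : forall b, bilinform b ->
  Bs b (Delta (hs s)) =
  \sum_(K : (size s).-tuple 'I_n) b (amon a (unzip1 s) K) (amon a K (unzip2 s)).
Proof.
elim: s => [|[i j] s IH] b Hb.
  rewrite sum_tuple0 /hs big_nil /amon /= !big_nil.
  by case: HA => [[_ _ H1 _ _] _]; rewrite /Bs (H1 b Hb) big_seq1.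
rewrite {1}/hs big_cons -/(hs s) /= Delta_mul //.
rewrite (eq_bigr (fun p : A * A => \sum_(K : (size s).-tuple 'I_n)
   b (p.1 * amon a (unzip1 s) K) (p.2 * amon a K (unzip2 s)))); last first.
  by move=> p _; have := IH _ (bilML Hb p.1 p.2); rewrite /Bs => <-.
rewrite exchange_big /= sum_tupleS /=.
under eq_bigr => K _.
  have := (Ha.1 i j _ (bilMR Hb (amon a (unzip1 s) K) (amon a K (unzip2 s)))).
  rewrite big_image /= => ->.
over.
rewrite exchange_big /=; apply: eq_bigr => l _; apply: eq_bigr => K _.
by rewrite /amon /= !big_cons.
Qed.

End Delta.

Section DE.
Variables (k : fieldType) (n : nat) (A : algType k) (Delta : A -> seq (A * A))
  (eps : A -> k) (HA : is_bialgebra Delta eps)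
  (a : 'I_n -> 'I_n -> A) (Ha : is_comodule Delta eps a).

Lemma phi_Delta u b (Hb : bilinform b) :
  Bs b [seq (phi a p.1, phi a p.2) | p <- TC_Delta u] = Bs b (Delta (phi a u)).
Proof.
rewrite /Bs big_map /TC_Delta big_flatten big_map /=.
rewrite phiE -/(Bs b _) (Delta_sum HA Hb); apply: eq_bigr => w _.
rewrite big_image /= (Dhs HA Ha (fmonom_val w) Hb) mulr_sumr.
by apply: eq_bigr => K _; rewrite phiZ !phi_tmon bilZl.
Qed.

Lemma eps_lin c x y : eps (c *: x + y) = c * eps x + eps y.
Proof. by case: HA => _ [H _ _]; apply: H. Qed.

Lemma eps0 : eps 0 = 0.
Proof. by have := eps_lin (-1) 0 0; rewrite scaler0 addr0 mulN1r addNr. Qed.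

Lemma phi_eps u : eps (phi a u) = TC_eps u.
Proof.
rewrite phiE /TC_eps.
elim: (enum_fset (msupp u)) => [|w s IH]; first by rewrite !big_nil eps0.
rewrite !big_cons eps_lin IH; congr (_ * _ + _).
case: HA => _ [_ HM H1].
rewrite /hw (big_morph eps HM H1); apply: eq_bigr => p _.
by rewrite Ha.2.
Qed.
End DE.

Section Q.
Variables (k : fieldType) (n : nat) (Iset : Type) (F : Iset -> linmap k n).

Lemma piAF_eq u v : IF F (u - v) -> piAF F u = piAF F v.
Proof. by move=> H; apply/eqmodP; apply/asboolP. Qed.

Lemma repr_piAF u : IF F (repr (piAF F u) - u).
Proof.
have : piAF F (repr (piAF F u)) = piAF F u by rewrite /piAF reprK.
by move/eqmodP/asboolP.
Qed.

Lemma piAF_add u v : AF_add (piAF F u) (piAF F v) = piAF F (u + v).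
Proof.
apply: piAF_eq.
have -> : repr (piAF F u) + repr (piAF F v) - (u + v) =
  (repr (piAF F u) - u) + (repr (piAF F v) - v) by rewrite addrACA opprD.
by apply: Defs.idealD; apply: repr_piAF.
Qed.

Lemma piAF_mul u v : AF_mul (piAF F u) (piAF F v) = piAF F (u * v).
Proof.
apply: piAF_eq.
have -> : repr (piAF F u) * repr (piAF F v) - (u * v) =
  (repr (piAF F u) - u) * repr (piAF F v) + u * (repr (piAF F v) - v).
  by rewrite mulrBl mulrBr addrA subrK.
apply: Defs.idealD.
  exact: (Defs.idealMr _ (repr_piAF u)).
exact: (Defs.idealMl _ (repr_piAF v)).
Qed.

Lemma piAF_scale c u : AF_scale c (piAF F u) = piAF F (c *: u).
Proof.
apply: piAF_eq; rewrite -scalerBr -mul_malgC.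
by apply: Defs.idealMl; apply: repr_piAF.
Qed.

Lemma malgU_prod (s : seq ('I_n * 'I_n)) :
  << FMonom s >> = \prod_(p <- s) tgen k p.1 p.2 :> TC k n.
Proof.
elim: s => [|p s IH].
  rewrite big_nil -mpolyC1E; congr (<< _ *g _ >>); apply/eqP; by rewrite fmP /= fm1.
rewrite big_cons -IH /tgen malgM_def fgmulUU mulr1; congr (<< _ *g _ >>).
apply: val_inj => /=; rewrite fmM; by case: p.
Qed.

Lemma malgUZ c (w : {fmonom ('I_n * 'I_n)%type}) :
  << c *g w >> = c *: << w >> :> TC k n.
Proof.
apply/malgP => m; rewrite mcoeffZ !mcoeffU.
by case: (w == m); rewrite ?mulr1 ?mulr0.
Qed.

Variables (A : algType k) (a : 'I_n -> 'I_n -> A).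

Lemma hom_unique (psi : TC k n -> A)
  (HD : forall x y, psi (x + y) = psi x + psi y)
  (H0 : psi 0 = 0)
  (HZ : forall c x, psi (c *: x) = c *: psi x)
  (HM : forall x y, psi (x * y) = psi x * psi y)
  (H1 : psi 1 = 1)
  (Ht : forall i j, psi (tgen k i j) = a i j) u : psi u = phi a u.
Proof.
rewrite phiE {1}(monalgE u).
elim: (enum_fset (msupp u)) => [|w s IH]; first by rewrite !big_nil.
rewrite !big_cons HD IH malgUZ HZ; congr (_ *: _ + _).
case: w => s'; rewrite malgU_prod (big_morph psi HM H1) /hw /=.
by apply: eq_bigr => p _; rewrite Ht.
Qed.
End Q.
Unset Implicit Arguments.

Theorem mainTheorem2 (k : fieldType) (n : nat) (Iset : Type)
    (F : Iset -> linmap k n)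
    (A : algType k) (Delta : A -> seq (A * A)) (eps : A -> k)
    (HA : is_bialgebra Delta eps)
    (a : 'I_n -> 'I_n -> A) (Ha : is_comodule Delta eps a)
    (Hcol : forall i : Iset, colinear a (F i)) :
  exists! pi : AF F -> A,
    is_bialg_morph_AF Delta eps pi /\
    (forall i j : 'I_n, pi (rhoAF F i j) = a i j).
Proof.
pose pi := fun x : AF F => phi a (repr x).
have Hpi u : pi (piAF F u) = phi a u.
  apply/eqP; rewrite -subr_eq0 -phiB (phi_ideal Hcol) //; exact: repr_piAF.
exists pi; split.
  split; last by move=> i j; rewrite /rhoAF Hpi phi_tgen.
  split.
  - by move=> x y; rewrite /AF_add Hpi phiD.
  - by move=> x y; rewrite /AF_mul Hpi phiM.
  - by rewrite /AF_one Hpi phi1.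
  - by move=> c x; rewrite /AF_scale Hpi phiZ.
  split => x.
    move=> b Hb; rewrite /AF_Delta -map_comp.
    rewrite (eq_map (g := fun p => (phi a p.1, phi a p.2))); last first.
      by move=> p /=; rewrite !Hpi.
    exact: (phi_Delta HA Ha (repr x) Hb).
  by rewrite /pi (phi_eps HA Ha).
move=> pi' [[HD HM H1 HZ _] Hr].
have Hpsi u : pi' (piAF F u) = phi a u.
  apply: (@hom_unique _ _ _ a (fun u => pi' (piAF F u))).
  - by move=> x y /=; rewrite -piAF_add HD.
  - have -> : piAF F 0 = AF_scale 0 (piAF F 0) by rewrite piAF_scale scale0r.
    by rewrite HZ scale0r.
  - by move=> c x /=; rewrite -piAF_scale HZ.
  - by move=> x y /=; rewrite -piAF_mul HM.
  - exact: H1.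
  - exact: Hr.
apply: funext => x.
have E : x = piAF F (repr x) by rewrite /piAF reprK.
by rewrite E Hpi Hpsi.
Qed.
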